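(* Let $a,b\in K$. Then: (1) The skew rational function $(T-b)^{-1}$ is defined at $a$ if and only if $b\notin\Delta(a)$ and, for every $c\in\Delta(a)$, the equation $\sigma(x)c+\delta(x)-bx=1$ has a solution $x\in K$. (2) If $(T-b)^{-1}$ is defined at $a$, then its value at $a$ is the unique solution $x\in K$ of $\sigma(x)a+\delta(x)-bx=1$.
   Context: Let $K$ be a skew field, $K^*=K\setminus\{0\}$, $\sigma\colon K\to K$ a ring endomorphism and $\delta\colon K\to K$ a $\sigma$-derivation ($\delta$ additive, $\delta(ab)=\sigma(a)\delta(b)+\delta(a)b$). $K[T;\sigma,\delta]$ is the skew polynomial ring with $Ta=\sigma(a)T+\delta(a)$. The $(\sigma,\delta)$-action of $K^*$ on $K$ is ${}^{b}a=\sigma(b)ab^{-1}+\delta(b)b^{-1}$; $\Delta(a)=\{{}^{b}a:b\in K^*\}$ is the $(\sigma,\delta)$-conjugacy class of $a$. For $P\in K[T;\sigma,\delta]$ and $a\in K$, $P(a)$ is the unique element of $K$ with $P(T)-P(a)\in K[T;\sigma,\delta](T-a)$. For a nonempty set $Z$ with a $K^*$-action, functions $Z\to K$ are added pointwise and the skew product is $(f\diamond g)(z)=f({}^{g(z)}z)g(z)$ if $g(z)\neq0$, $0$ otherwise; $f$ is skew invertible if some $g$ satisfies $f\diamond g=g\diamond f=1$, and $g=f^{\langle-1\rangle}$. For an invariant set $A\subseteq K$, $P$ gives the function $A\to K$, $c\mapsto P(c)$. $K(T;\sigma,\delta)$ is the division ring of left fractions of the left Ore domain $K[T;\sigma,\delta]$;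 each $f$ has a unique minimal representation $f=P(T)^{-1}Q(T)$ with $P$ monic of least degree. $f$ is defined at $a$ if $P\colon\Delta(a)\to K$ is skew invertible, and then $f(a)=(P^{\langle-1\rangle}\diamond Q)(a)$ with $P^{\langle-1\rangle}$ the skew inverse on $\Delta(a)$. *)

(* Defs.v *)
From Stdlib Require Import ClassicalEpsilon.
From HB Require Import structures.
From mathcomp Require Import all_boot all_algebra.
Set Implicit Arguments.
Unset Strict Implicit.
Unset Printing Implicit Defensive.
Import GRing.Theory.
Local Open Scope ring_scope.

Definition is_skew_field (K : unitRingType) : Prop :=
  forall x : K, x != 0 -> x \is a GRing.unit.

Definition is_sigma_derivation (K : unitRingType) (sigma delta : K -> K) : Prop :=
  (forall x y, delta (x + y) = delta x + delta y) /\
  (forall x y, delta (x * y) = sigma x * delta y + delta x * y).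

Section Skew.
Variable K : unitRingType.
Variables (sigma delta : K -> K).

(* Elements of K[T;sigma,delta] are represented by their coefficient
   polynomials sum_i p_i T^i (coefficients on the left); only the additive
   structure, 'X, constants, size and lead_coef of {poly K} are used. *)

(* left multiplication by T:  T * (sum q_i T^i) = sum (sigma(q_i) T^(i+1) + delta(q_i) T^i) *)
Definition skew_mulT (q : {poly K}) : {poly K} :=
  'X * map_poly sigma q + map_poly delta q.

Definition skew_mul (p q : {poly K}) : {poly K} :=
  \sum_(i < size p) (p`_i)%:P * iter (nat_of_ord i) skew_mulT q.

(* P(a): the unique c in K with P - c in K[T;sigma,delta] (T - a). *)
Definition skew_eval (P : {poly K}) (a : K) : K :=
  epsilon (inhabits 0)
    (fun c => exists Q : {poly K}, P - c%:P = skew_mul Q ('X - a%:P)).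

Definition skew_act (b a : K) : K := sigma b * a * b^-1 + delta b * b^-1.

Definition conj_class (a : K) : K -> Prop :=
  fun c => exists2 b : K, b != 0 & c = skew_act b a.

(* skew product of functions Z -> K (represented as functions K -> K) *)
Definition skew_prod (f g : K -> K) (z : K) : K :=
  if g z == 0 then 0 else f (skew_act (g z) z) * g z.

Definition skew_inverse_on (Z : K -> Prop) (f g : K -> K) : Prop :=
  forall z, Z z -> skew_prod f g z = 1 /\ skew_prod g f z = 1.

Definition skew_invertible_on (Z : K -> Prop) (f : K -> K) : Prop :=
  exists g, skew_inverse_on Z f g.

(* Left fractions P^-1 Q (P <> 0) in K(T;sigma,delta): P^-1 Q = P'^-1 Q'
   iff U P = U' P' <> 0 and U Q = U' Q' for some U, U'. *)
Definition frac_eq (P Q P' Q' : {poly K}) : Prop :=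
  exists U U' : {poly K},
    [/\ skew_mul U P = skew_mul U' P', skew_mul U P != 0 &
        skew_mul U Q = skew_mul U' Q'].

Definition is_rep (P Q P0 Q0 : {poly K}) : Prop :=
  P != 0 /\ frac_eq P Q P0 Q0.

Definition minimal_rep (P Q P0 Q0 : {poly K}) : Prop :=
  [/\ is_rep P Q P0 Q0, P \is monic &
      forall P' Q', is_rep P' Q' P0 Q0 -> P' \is monic -> (size P <= size P')%N].

Definition defined_at (P0 Q0 : {poly K}) (a : K) : Prop :=
  exists P Q, minimal_rep P Q P0 Q0 /\
    skew_invertible_on (conj_class a) (fun c => skew_eval P c).

Definition value_at (P0 Q0 : {poly K}) (a v : K) : Prop :=
  exists P Q g, [/\ minimal_rep P Q P0 Q0,
    skew_inverse_on (conj_class a) (fun c => skew_eval P c) g &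
    v = skew_prod g (fun c => skew_eval Q c) a].

End Skew.

(* Main.v *)
Require Import Defs.
From HB Require Import structures.
From mathcomp Require Import all_boot all_algebra.
From Stdlib Require Import ClassicalEpsilon Lia.
From mathcomp Require Import zify.
Import GRing.Theory.
Local Open Scope ring_scope.

Lemma zmod6 (V : zmodType) (a d b a' d' b' : V) :
  (a - a') + (d - d') - (b - b') = (a + d - b) - (a' + d' - b').
Proof.
rewrite [in RHS]opprD opprK [in RHS]opprD [RHS]addrACA.
by rewrite [X in _ = X + _]addrACA opprB (addrC (- b)).
Qed.

Section Aux.
Variable K : unitRingType.
Variable sigma : {rmorphism K -> K}.
Variable delta : K -> K.
Hypothesis hK : is_skew_field K.
Hypothesis hdelta : is_sigma_derivation sigma delta.

Lemma deltaD x y : delta (x + y) = delta x + delta y.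
Proof. by case: hdelta. Qed.
Lemma deltaM x y : delta (x * y) = sigma x * delta y + delta x * y.
Proof. by case: hdelta. Qed.
Lemma delta0 : delta 0 = 0.
Proof.
have := deltaD 0 0; rewrite addr0 -{1}[delta 0]addr0 => /addrI.
by move=> <-.
Qed.
Lemma deltaN x : delta (- x) = - delta x.
Proof. by apply/eqP; rewrite -addr_eq0 -deltaD addNr delta0. Qed.
Lemma deltaB x y : delta (x - y) = delta x - delta y.
Proof. by rewrite deltaD deltaN. Qed.
Lemma delta1 : delta 1 = 0.
Proof.
have := deltaM 1 1; rewrite mulr1 rmorph1 mul1r.
move=> /esym /(canRL (addrK _)) => h; by rewrite h mulr1 subrr.
Qed.

Lemma unitK (x : K) : x != 0 -> x \is a GRing.unit.
Proof. exact: hK. Qed.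
Arguments unitK [x].

Lemma mulf_neq0K (x y : K) : x != 0 -> y != 0 -> x * y != 0.
Proof.
move=> hx hy; apply/eqP => h; move/eqP: hy; apply.
by rewrite -(mulKr (unitK hx) y) h mulr0.
Qed.

Lemma sigma_neq0 x : x != 0 -> sigma x != 0.
Proof.
move=> hx; apply/eqP => h.
have := rmorph1 sigma; rewrite -(mulrV (unitK hx)) rmorphM h mul0r => /eqP.
by rewrite (mulrV (unitK hx)) eq_sym oner_eq0.
Qed.

Lemma sigma_inj : injective sigma.
Proof.
move=> x y h; apply/eqP; rewrite -subr_eq0; apply/negPn/negP => /sigma_neq0.
by rewrite rmorphB h subrr eqxx.
Qed.

Lemma itsig_neq0 n x : x != 0 -> iter n sigma x != 0.
Proof. by move=> hx; elim: n => //= n ih; apply: sigma_neq0. Qed.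
Lemma itsig1 n : iter n sigma 1 = 1.
Proof. by elim: n => //= n ->; rewrite rmorph1. Qed.
Lemma itsig_inj n : injective (iter n sigma).
Proof. by elim: n => //= n ih x y /sigma_inj /ih. Qed.

Local Notation sT := (skew_mulT sigma delta).
Local Notation sM := (skew_mul sigma delta).

Lemma skew_mulTB p q : sT (p - q) = sT p - sT q.
Proof.
apply/polyP => i; rewrite /skew_mulT !(coefD, coefB, coefN, coefXM).
rewrite !coef_map_id0 ?rmorph0 ?delta0 // !coefB rmorphB deltaB.
case: eqP => _; first by rewrite !add0r.
by rewrite opprD addrACA.
Qed.


Lemma iter_sTB n p q : iter n sT (p - q) = iter n sT p - iter n sT q.
Proof. by elim: n => //= n ->; rewrite skew_mulTB. Qed.

Lemma skew_mulB u p q : sM u (p - q) = sM u p - sM u q.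
Proof.
rewrite /skew_mul -sumrB; apply: eq_bigr => i _.
by rewrite iter_sTB mulrBr.
Qed.

Lemma skew_mulr0 u : sM u 0 = 0.
Proof. by have := skew_mulB u 0 0; rewrite !subrr. Qed.

Lemma skew_mul0r q : sM 0 q = 0.
Proof. by rewrite /skew_mul size_poly0 big_ord0. Qed.

Lemma skew_mulC c q : sM c%:P q = c%:P * q.
Proof.
rewrite /skew_mul size_polyC; have [->|hc] := eqVneq c 0.
  by rewrite big_ord0 mul0r.
by rewrite big_ord1 /= coefC.
Qed.

Lemma skew_mul1r q : sM 1 q = q.
Proof. by rewrite skew_mulC mul1r. Qed.

Lemma map_delta_Xn n : map_poly delta 'X^n = 0.
Proof.
apply/polyP => i; rewrite coef_map_id0 ?delta0 // coefXn coef0.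
by case: eqP => _; rewrite ?delta1 ?delta0.
Qed.

Lemma iter_sT1 n : iter n sT 1 = 'X^n.
Proof.
elim: n => //= n ->; rewrite /skew_mulT map_delta_Xn addr0.
by rewrite map_polyXn exprS.
Qed.

Lemma skew_mulr1 p : sM p 1 = p.
Proof.
rewrite /skew_mul -[RHS]coefK poly_def; apply: eq_bigr => i _.
by rewrite iter_sT1 mul_polyC.
Qed.


Lemma size_map_sigma q : size (map_poly sigma q) = size q.
Proof. apply: size_map_inj_poly; [exact: sigma_inj | exact: rmorph0]. Qed.

Lemma sT_size q : q != 0 ->
  size (sT q) = (size q).+1 /\ lead_coef (sT q) = sigma (lead_coef q).
Proof.
move=> hq; rewrite /skew_mulT.
have hm : map_poly sigma q != 0 by rewrite -size_poly_eq0 size_map_sigma size_poly_eq0.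
have e : 'X * map_poly sigma q = map_poly sigma q * 'X by rewrite (commr_polyX (map_poly sigma q)).
have hs : size ('X * map_poly sigma q) = (size q).+1 by rewrite e size_mulX // size_map_sigma.
have hd : (size (map_poly delta q) < size ('X * map_poly sigma q)%R)%N.
  by rewrite hs ltnS; exact: size_poly.
split; first by rewrite size_polyDl // hs.
rewrite lead_coefDl // e lead_coefMX.
apply: lead_coef_map_inj; [exact: sigma_inj | exact: rmorph0].
Qed.

Lemma iter_size n q : q != 0 ->
  size (iter n sT q) = (size q + n)%N /\ lead_coef (iter n sT q) = iter n sigma (lead_coef q).
Proof.
move=> hq; elim: n => [|n [ihs ihl]] /=; first by rewrite addn0.
have hn : iter n sT q != 0 by rewrite -size_poly_eq0 ihs addn_eq0 size_poly_eq0 negb_and hq.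
have [-> ->] := sT_size (iter n sT q) hn; by rewrite ihs ihl addnS.
Qed.

Lemma size_Cmul (c : K) (p : {poly K}) : c != 0 -> size (c%:P * p) = size p /\ lead_coef (c%:P * p) = c * lead_coef p.
Proof.
move=> hc; have hr : GRing.lreg c by apply: mulrI; exact: unitK.
by rewrite mul_polyC lreg_size // lead_coef_lreg.
Qed.

Lemma skew_mul_size (p q : {poly K}) : p != 0 -> q != 0 ->
  size (sM p q) = (size p + size q).-1 /\ lead_coef (sM p q) = lead_coef p * iter (size p).-1 sigma (lead_coef q).
Proof.
move=> hp hq; rewrite /skew_mul.
have hsp : size p = (size p).-1.+1 by rewrite prednK // lt0n size_poly_eq0.
set n := (size p).-1 in hsp *.
rewrite hsp big_ord_recr /=.
have hl : lead_coef p = p`_n by rewrite lead_coefE hsp.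
have hlp : p`_n != 0 by rewrite -hl lead_coef_eq0.
have [hs1 hl1] := iter_size n q hq.
have [hs2 hl2] := size_Cmul (p`_n) (iter n sT q) hlp.
have hlow : (size (\sum_(i < n) (p`_(widen_ord (leqnSn n) i))%:P * iter (widen_ord (leqnSn n) i) sT q)%R
   < size ((p`_n)%:P * iter n sT q)%R)%N.
  rewrite hs2 hs1.
  have hqs : (0 < size q)%N by rewrite lt0n size_poly_eq0.
  have hpos : (0 < size q + n)%N by rewrite addn_gt0 hqs.
  apply: (@leq_ltn_trans (size q + n).-1); last by rewrite prednK.
  apply: (big_ind (fun r : {poly K} => size r <= (size q + n).-1)%N).
  - by rewrite size_poly0.
  - by move=> x y hx hy; apply: leq_trans (size_polyD _ _) _; rewrite geq_max hx hy.
  - move=> i _; rewrite mul_polyC; apply: leq_trans (size_scale_leq _ _) _.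
    have [-> _] := iter_size i q hq; rewrite -ltnS prednK //= ltn_add2l.
    exact: ltn_ord.
split.
  rewrite addrC size_polyDl // hs2 hs1.
  by rewrite addnC.
by rewrite lead_coefDr // hl2 hl1 hl.
Qed.


Local Notation sE := (skew_eval sigma delta).


Lemma eval_XsubC b c : sE ('X - b%:P) c = c - b.
Proof.
rewrite /skew_eval.
have : exists e, exists Q : {poly K}, 'X - b%:P - e%:P = sM Q ('X - c%:P).
  by exists (c - b), 1; rewrite skew_mul1r polyCB opprB addrA subrK.
move/(epsilon_spec (inhabits 0)).
set e := epsilon _ _.
move=> [Q h].
have e1 : 'X - b%:P - e%:P = 'X - (b + e)%:P :> {poly K} by rewrite polyCD opprD addrA.
rewrite e1 in h.
have [hQ0|hQ] := eqVneq Q 0.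
  by move: h; rewrite hQ0 skew_mul0r => h; have := congr1 (fun r : {poly K} => size r) h; rewrite /= size_XsubC size_poly0.
have hX : 'X - c%:P != 0 :> {poly K} by rewrite -size_poly_eq0 size_XsubC.
have [hs _] := skew_mul_size Q ('X - c%:P) hQ hX.
have hQ1 : size Q = 1%N.
  by move: hs; rewrite -h size_XsubC size_XsubC addn2 /= => [[]].
move: h; rewrite (size1_polyC (eq_leq hQ1)) skew_mulC => h.
have h1 := congr1 (fun r : {poly K} => r`_1) h.
have h0 := congr1 (fun r : {poly K} => r`_0) h.
move: h1 h0; rewrite /= !coefE /= !subr0 !sub0r mulr1 => <-.
rewrite mul1r => /eqP; rewrite eqr_opp => /eqP <-.
by rewrite addrC addKr.
Qed.

Lemma eval_1 c : sE 1 c = 1.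
Proof.
rewrite /skew_eval.
have : exists e, exists Q : {poly K}, 1 - e%:P = sM Q ('X - c%:P).
  by exists 1, 0; rewrite skew_mul0r subrr.
move/(epsilon_spec (inhabits 0)).
set e := epsilon _ _.
move=> [Q h].
have [hQ0|hQ] := eqVneq Q 0.
  move: h; rewrite hQ0 skew_mul0r => /(congr1 (fun r : {poly K} => r`_0)).
  by rewrite !coefE /= => /eqP; rewrite subr_eq0 => /eqP.
have hX : 'X - c%:P != 0 :> {poly K} by rewrite -size_poly_eq0 size_XsubC.
have [hs _] := skew_mul_size Q ('X - c%:P) hQ hX.
have : (size (1 - e%:P : {poly K})%R <= 1)%N by rewrite -polyC1 -polyCB size_polyC leq_b1.
rewrite h hs size_XsubC addn2 /= ltnS leqn0 size_poly_eq0.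
by rewrite (negbTE hQ).
Qed.


Lemma XsubC_neq0 (c : K) : 'X - c%:P != 0 :> {poly K}.
Proof. by rewrite -size_poly_eq0 size_XsubC. Qed.

Lemma size_mulXsubC (U : {poly K}) c : U != 0 ->
  size (sM U ('X - c%:P)) = (size U).+1 /\ lead_coef (sM U ('X - c%:P)) = lead_coef U.
Proof.
move=> hU; have [hs hl] := skew_mul_size U _ hU (XsubC_neq0 c).
by rewrite hs hl size_XsubC lead_coefXsubC itsig1 mulr1 addn2.
Qed.

Lemma rep_ge2 b P Q : is_rep sigma delta P Q ('X - b%:P) 1 -> P \is monic -> (2 <= size P)%N.
Proof.
move=> [hP [U [U' [e1 hne e2]]]] hm.
rewrite leqNgt; apply/negP => hs.
have hP1 : P = 1.
  rewrite (size1_polyC hs); move/monicP: hm; rewrite lead_coefE.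
  have : size P = 1%N.
    by apply/eqP; rewrite eqn_leq -ltnS hs lt0n size_poly_eq0 hP.
  by move=> -> /= ->.
move: e1 hne e2; rewrite hP1 !skew_mulr1 => e1 hU e2.
have hU' : U' != 0 by apply: contraNneq hU => h; rewrite e1 h skew_mul0r.
have hQ : Q != 0 by apply: contraNneq hU' => h; rewrite -e2 h skew_mulr0.
have [hs1 _] := size_mulXsubC U' b hU'.
have [hs2 _] := skew_mul_size U Q hU hQ.
have hQs : (0 < size Q)%N by rewrite lt0n size_poly_eq0.
move: hs2; rewrite e2 e1 hs1 => /eqP.
move/eqP; lia.
Qed.

Lemma monic2 (P : {poly K}) : P \is monic -> size P = 2%N -> P = 'X - (- P`_0)%:P.
Proof.
move=> /monicP hm hs; apply/polyP => i.
rewrite coefB coefX coefC.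
case: i => [|[|i]] /=; first by rewrite sub0r opprK.
  by rewrite subr0 -hm lead_coefE hs.
rewrite subr0; apply/(leq_sizeP _ 2); by rewrite ?hs.
Qed.

Lemma minrep b P Q : minimal_rep sigma delta P Q ('X - b%:P) 1 -> P = 'X - b%:P /\ Q = 1.
Proof.
move=> [hr hm hmin].
have hr0 : is_rep sigma delta ('X - b%:P) 1 ('X - b%:P) 1.
  split; first exact: XsubC_neq0.
  by exists 1, 1; rewrite skew_mul1r; split => //; exact: XsubC_neq0.
have hle := hmin _ _ hr0 (monicXsubC b).
rewrite size_XsubC in hle.
have hge := rep_ge2 b P Q hr hm.
have hs : size P = 2%N by apply/eqP; rewrite eqn_leq hle hge.
set c := - P`_0.
have hPc := monic2 P hm hs.
move: hr => [hP [U [U' [e1 hne e2]]]].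
rewrite hPc in e1 hne.
have hU : U != 0 by apply: contraNneq hne => h; rewrite h skew_mul0r.
have hU' : U' != 0 by apply: contraNneq hne => h; rewrite e1 h skew_mul0r.
have hQ : Q != 0 by apply: contraNneq hU' => h; rewrite -(skew_mulr1 U') -e2 h skew_mulr0.
have [hs1 hl1] := size_mulXsubC U c hU.
have [hs2 hl2] := size_mulXsubC U' b hU'.
have hUU : size U = size U' by apply/eqP; rewrite -eqSS -hs1 -hs2 e1.
have [hs3 hl3] := skew_mul_size U Q hU hQ.
rewrite e2 skew_mulr1 -hUU in hs3.
have hQs : (0 < size Q)%N by rewrite lt0n size_poly_eq0.
have hQ1 : size Q = 1%N.
  have hUs : (0 < size U)%N by rewrite lt0n size_poly_eq0.
  move/eqP: hs3; rewrite -(prednK hQs) addnS /= -{1}[(size U)]addn0 eqn_add2l.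
  by move/eqP => <-.
have hQc := size1_polyC (eq_leq hQ1).
have hlQ : lead_coef Q = Q`_0 by rewrite lead_coefE hQ1.
rewrite e2 skew_mulr1 hlQ -hl2 -e1 hl1 in hl3.
have hlU : lead_coef U != 0 by rewrite lead_coef_eq0.
have : lead_coef U * 1 = lead_coef U * iter (size U).-1 sigma Q`_0 by rewrite mulr1.
move/(mulrI (unitK hlU)); rewrite -(itsig1 (size U).-1) => /itsig_inj hq.
have hQ1' : Q = 1 by rewrite hQc -hq.
split; last by [].
rewrite hPc; congr ('X - _%:P).
move: e2; rewrite hQ1' !skew_mulr1 => e2.
rewrite -e2 in e1.
have : sM U (('X - c%:P) - ('X - b%:P)) = 0 by rewrite skew_mulB e1 subrr.
rewrite opprB addrC subrKA -polyCB => h0.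
have hbc : b - c = 0.
  apply/eqP; apply: contraT => hbc.
  have hC : (b - c)%:P != 0 :> {poly K} by rewrite polyC_eq0.
  have [hs4 _] := skew_mul_size U _ hU hC.
  move: hs4; rewrite h0 size_poly0 size_polyC hbc addn1 /= => /eqP.
  by rewrite eq_sym size_poly_eq0 (negbTE hU).
by apply/eqP; rewrite eq_sym -subr_eq0 hbc.
Qed.


Local Notation act := (skew_act sigma delta).

Lemma act1 c : act 1 c = c.
Proof. by rewrite /skew_act rmorph1 delta1 invr1 !mulr1 mul1r addr0. Qed.

Lemma act_comp y u c : y != 0 -> u != 0 -> act y (act u c) = act (y * u) c.
Proof.
move=> hy hu; rewrite /skew_act rmorphM deltaM (invrM (unitK hy) (unitK hu)).
rewrite !mulrDr !mulrDl !mulrA -!addrA; congr (_ + _); congr (_ + _).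
by rewrite (mulrK (unitK hu)).
Qed.

Lemma eqn_act x c b : x != 0 ->
  (act x c - b) * x = sigma x * c + delta x - b * x.
Proof.
move=> hx; rewrite /skew_act mulrBl mulrDl.
by rewrite !(mulrVK (unitK hx)).
Qed.

Lemma conj_refl a : conj_class sigma delta a a.
Proof. by exists 1; rewrite ?oner_neq0 ?act1. Qed.

Lemma conj_trans a c y : conj_class sigma delta a c -> y != 0 ->
  conj_class sigma delta a (act y c).
Proof.
move=> [u hu ->] hy; exists (y * u); first exact: mulf_neq0K.
exact: act_comp.
Qed.

Definition sol b c x := sigma x * c + delta x - b * x = 1.

Lemma sol_neq0 b c x : sol b c x -> x != 0.
Proof.
rewrite /sol => h; apply/eqP => hx; move: h; rewrite hx rmorph0 delta0 mul0r mulr0.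
rewrite subr0 addr0 => h; have := @oner_neq0 K; by rewrite -h eqxx.
Qed.

Lemma sol_uniq a b c x x' : ~ conj_class sigma delta a b -> conj_class sigma delta a c ->
  sol b c x -> sol b c x' -> x = x'.
Proof.
move=> hb hc h h'; apply/eqP; rewrite -subr_eq0; apply/negPn/negP => hy.
have e : sigma (x - x') * c + delta (x - x') - b * (x - x') = 0.
  rewrite rmorphB deltaB mulrBl mulrBr.
  move: h h'; rewrite /sol => h h'.
  by rewrite zmod6 h h' subrr.
move: e; rewrite -eqn_act // => /eqP.
apply/negP; apply: mulf_neq0K => //.
apply/eqP => hb0; apply: hb.
have -> : b = act (x - x') c by apply/eqP; rewrite eq_sym -subr_eq0 hb0.
exact: conj_trans.
Qed.

Lemma sol_inv b z : z - b != 0 -> sol b (act (z - b) z) (z - b)^-1.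
Proof.
move=> hy; have hu := unitK hy.
have hx : (z - b)^-1 != 0 by rewrite invr_eq0.
rewrite /sol -eqn_act // act_comp // (mulVr hu) act1.
exact: mulrV.
Qed.



Lemma skew_prod_f b g z : g z != 0 ->
  skew_prod sigma delta (fun c => sE ('X - b%:P) c) g z = sigma (g z) * z + delta (g z) - b * g z.
Proof. by move=> hg; rewrite /skew_prod (negbTE hg) eval_XsubC eqn_act. Qed.

Lemma skew_prod_0 f g z : g z = 0 -> skew_prod sigma delta f g z = 0.
Proof. by move=> h; rewrite /skew_prod h eqxx. Qed.

Lemma one_neq0 : (1 : K) <> 0.
Proof. by move=> h; have := @oner_neq0 K; rewrite h eqxx. Qed.

Lemma defined_iff a b :
  defined_at sigma delta ('X - b%:P) 1 a <->
     ~ conj_class sigma delta a b /\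
     (forall c, conj_class sigma delta a c ->
        exists x : K, sigma x * c + delta x - b * x = 1).
Proof.
split.
  move=> [P [Q [hmin [g hg]]]].
  have [hP _] := minrep b P Q hmin; subst P.
  split.
    move=> hb; have [_ h2] := hg b hb.
    by apply: one_neq0; rewrite -h2 skew_prod_0 // eval_XsubC subrr.
  move=> c hc; have [h1 _] := hg c hc.
  have hgc : g c != 0 by apply/eqP => h0; apply: one_neq0; rewrite -h1 skew_prod_0.
  by exists (g c); rewrite -skew_prod_f.
move=> [hb hsol].
pose g z := epsilon (inhabits 0) (fun x => sol b z x).
have gP z : conj_class sigma delta a z -> sol b z (g z).
  by move=> hz; apply: epsilon_spec; exact: hsol.
exists ('X - b%:P), 1; split.
  split.
  - split; first exact: XsubC_neq0.
    by exists 1, 1; rewrite skew_mul1r; split => //; exact: XsubC_neq0.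
  - exact: monicXsubC.
  - by move=> P' Q' hr hm; rewrite size_XsubC; exact: (rep_ge2 b P' Q' hr hm).
exists g => z hz; split.
  have hgz := sol_neq0 _ _ _ (gP z hz).
  by rewrite skew_prod_f //; exact: (gP z hz).
have hzb : z - b != 0.
  by apply/eqP => h; apply: hb; move/eqP: h; rewrite subr_eq0 => /eqP <-.
rewrite /skew_prod eval_XsubC (negbTE hzb).
have hw := conj_trans _ _ (z - b) hz hzb.
rewrite (sol_uniq _ _ _ _ _ hb hw (gP _ hw) (sol_inv _ _ hzb)).
exact: mulVr (unitK hzb).
Qed.

Lemma main a b :
  (defined_at sigma delta ('X - b%:P) 1 a <->
     ~ conj_class sigma delta a b /\
     (forall c, conj_class sigma delta a c ->
        exists x : K, sigma x * c + delta x - b * x = 1)) /\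
  (defined_at sigma delta ('X - b%:P) 1 a ->
     (exists! x : K, sigma x * a + delta x - b * x = 1) /\
     (forall v, value_at sigma delta ('X - b%:P) 1 a v ->
        sigma v * a + delta v - b * v = 1)).
Proof.
split; first exact: defined_iff.
move=> hd; have [hb hsol] := (defined_iff a b).1 hd.
split.
  have [x hx] := hsol a (conj_refl a).
  exists x; split => // x' hx'.
  exact: (sol_uniq _ _ _ _ _ hb (conj_refl a) hx hx').
move=> v [P [Q [g [hmin hg ->]]]].
have [hP hQ] := minrep b P Q hmin; subst P Q.
have [h1 _] := hg a (conj_refl a).
rewrite /skew_prod eval_1 oner_eq0 act1 mulr1.
have hga : g a != 0 by apply/eqP => h0; apply: one_neq0; rewrite -h1 skew_prod_0.
by rewrite -skew_prod_f.
Qed.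

End Aux.

Theorem proposition3p2 (K : unitRingType) (sigma : {rmorphism K -> K})
  (delta : K -> K) (hK : is_skew_field K)
  (hdelta : is_sigma_derivation sigma delta) (a b : K) :
  (defined_at sigma delta ('X - b%:P) 1 a <->
     ~ conj_class sigma delta a b /\
     (forall c, conj_class sigma delta a c ->
        exists x : K, sigma x * c + delta x - b * x = 1)) /\
  (defined_at sigma delta ('X - b%:P) 1 a ->
     (exists! x : K, sigma x * a + delta x - b * x = 1) /\
     (forall v, value_at sigma delta ('X - b%:P) 1 a v ->
        sigma v * a + delta v - b * v = 1)).
Proof. exact: main. Qed.
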